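(* Let $G$ be a (possibly infinite) cyclic graph with vertex set $V$. For every $v\in V$, \[ \mathrm{wf}(G)=\lim_{m\to\infty}\frac{\gamma_m(v)}{m}. \]
   Context: $S^1=\mathbb{R}/\mathbb{Z}$; $\preceq$/$\prec$ denote clockwise cyclic order; $\vec d(p,q)\in[0,1)$ is the clockwise distance from $p$ to $q$. A directed graph has no loops and no pair of opposite edges; $N^+[G,v]=\{v\}\cup\{w:v\to w\}$. A directed graph with vertex set $V\subseteq S^1$ is cyclic if whenever $v\to u$ is an edge, $v\to w$ and $w\to u$ are edges for all $w\in V$ with $v\prec w\prec u\prec v$. For $0\le k<n/2$, $C_n^k$ is the cyclic graph on $\{0,\dots,n-1\}$ with edges $i\to i+s\bmod n$, $1\le s\le k$. A cyclic homomorphism is a directed-graph homomorphism (edges map to edges or collapse) weakly preserving cyclic order and non-constant when the domain has a directed cycle. For finite cyclic $G$, $\mathrm{wf}(G)=\sup\{k/n:\exists$ cyclic homomorphism $C_n^k\to G\}$; for arbitrary cyclic $G$, $\mathrm{wf}(G)=\sup\{\mathrm{wf}(G[W]):W\subseteq V$ finite$\}$. For $m\ge1$ and $v_0\in V$, $\gamma_m(v_0)=\sup\{\sum_{i=0}^{m-1}\vec d(v_i,v_{i+1}) : v_1,\dots,v_m\in V,\ v_{i+1}\in N^+[G,v_i]\}$ (the supremum of total clockwise length of length-$m$ directed walks from $v_0$, where staying put is allowed). *)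

(* Defs.v *)
From Stdlib Require Import Reals Lra.
Open Scope R_scope.

(* S^1 = R/Z is represented by the representatives in [0,1). *)
Definition in_S1 (x : R) : Prop := 0 <= x < 1.

(* clockwise distance d(p,q) in [0,1) ; clockwise = increasing representative mod 1 *)
Definition cwd (p q : R) : R := if Rle_dec p q then q - p else q - p + 1.

(* strict cyclic order  a < b < c < a  (clockwise, all distinct) *)
Definition scyc (a b c : R) : Prop := 0 < cwd a b /\ cwd a b < cwd a c.

Definition wcyc (a b c : R) : Prop := a = b \/ b = c \/ c = a \/ scyc a b c.

Definition is_digraph (V : R -> Prop) (E : R -> R -> Prop) : Prop :=
  (forall x, V x -> in_S1 x) /\
  (forall u v, E u v -> V u /\ V v) /\
  (forall v, ~ E v v) /\
  (forall u v, E u v -> ~ E v u).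

Definition is_cyclic (V : R -> Prop) (E : R -> R -> Prop) : Prop :=
  is_digraph V E /\
  forall v u w, E v u -> V w -> scyc v w u -> E v w /\ E w u.

Definition has_dicycle (V : R -> Prop) (E : R -> R -> Prop) : Prop :=
  exists (c : nat -> R) (l : nat), (0 < l)%nat /\
    (forall i, c (i + l)%nat = c i) /\ (forall i, V (c i) /\ E (c i) (c (S i))).

Definition CV (n : nat) (x : R) : Prop :=
  exists i : nat, (i < n)%nat /\ x = INR i / INR n.
Definition CE (n k : nat) (x y : R) : Prop :=
  exists i s : nat, (i < n)%nat /\ (1 <= s <= k)%nat /\
    x = INR i / INR n /\ y = INR ((i + s) mod n) / INR n.

Definition cyclic_hom (V1 : R -> Prop) (E1 : R -> R -> Prop)
    (V2 : R -> Prop) (E2 : R -> R -> Prop) (f : R -> R) : Prop :=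
  (forall x, V1 x -> V2 (f x)) /\
  (forall x y, E1 x y -> f x = f y \/ E2 (f x) (f y)) /\
  (forall a b c, V1 a -> V1 b -> V1 c -> wcyc a b c -> wcyc (f a) (f b) (f c)) /\
  (has_dicycle V1 E1 -> exists x y, V1 x /\ V1 y /\ f x <> f y).

Definition ind_V (V W : R -> Prop) (x : R) : Prop := V x /\ W x.
Definition ind_E (E : R -> R -> Prop) (W : R -> Prop) (x y : R) : Prop :=
  E x y /\ W x /\ W y.

Definition finite_set (W : R -> Prop) : Prop :=
  exists l : list R, forall x, W x -> List.In x l.

Definition wf_fin_set (V : R -> Prop) (E : R -> R -> Prop) (r : R) : Prop :=
  exists n k : nat, (2 * k < n)%nat /\ r = INR k / INR n /\
    exists f, cyclic_hom (CV n) (CE n k) V E f.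

Definition is_wf_fin (V : R -> Prop) (E : R -> R -> Prop) (w : R) : Prop :=
  is_lub (wf_fin_set V E) w.

Definition wf_set (V : R -> Prop) (E : R -> R -> Prop) (r : R) : Prop :=
  exists W : R -> Prop, (forall x, W x -> V x) /\ finite_set W /\
    is_wf_fin (ind_V V W) (ind_E E W) r.

Definition is_wf (V : R -> Prop) (E : R -> R -> Prop) (w : R) : Prop :=
  is_lub (wf_set V E) w.

Fixpoint rsum (f : nat -> R) (n : nat) : R :=
  match n with O => 0 | S n' => rsum f n' + f n' end.

Definition walk_len_set (V : R -> Prop) (E : R -> R -> Prop) (m : nat) (v0 : R)
    (r : R) : Prop :=
  exists c : nat -> R, c O = v0 /\
    (forall i, (i < m)%nat -> V (c (S i)) /\ (c (S i) = c i \/ E (c i) (c (S i)))) /\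
    r = rsum (fun i => cwd (c i) (c (S i))) m.

Definition is_gamma (V : R -> Prop) (E : R -> R -> Prop) (m : nat) (v0 : R)
    (g : R) : Prop :=
  is_lub (walk_len_set V E m v0) g.

(* Main.v *)
Require Import Defs.
From Stdlib Require Import Reals Lra Lia Psatz ZArith Arith Classical List.
Open Scope R_scope.


Definition lf (x X : R) : Prop := exists k : Z, X = x + IZR k.

Lemma cwd_cases x y : (x <= y /\ cwd x y = y - x) \/ (y < x /\ cwd x y = y - x + 1).
Proof. unfold cwd; destruct (Rle_dec x y); [left|right]; split; lra. Qed.

Lemma cwd_range x y : in_S1 x -> in_S1 y -> 0 <= cwd x y < 1.
Proof. unfold in_S1; intros; destruct (cwd_cases x y) as [[? ->]|[? ->]]; lra. Qed.

Lemma cwd_self x : cwd x x = 0.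
Proof. unfold cwd; destruct (Rle_dec x x); lra. Qed.

Lemma lf_refl x : lf x x.
Proof. exists 0%Z; simpl; ring. Qed.

Lemma lf_add x X k : lf x X -> lf x (X + IZR k).
Proof. intros [m ->]; exists (m + k)%Z; rewrite plus_IZR; ring. Qed.

Lemma lf_step x y X : lf x X -> lf y (X + cwd x y).
Proof. intros [k ->]. destruct (cwd_cases x y) as [[? ->]|[? ->]].
 - exists k; ring.
 - exists (k+1)%Z; rewrite plus_IZR; simpl; ring. Qed.

Lemma IZR_eq_of k m : IZR m - 1 < IZR k < IZR m + 1 -> k = m.
Proof. intros [h1 h2].
  assert (a1 : IZR (m - 1) < IZR k) by (rewrite minus_IZR; simpl; lra).
  assert (a2 : IZR k < IZR (m + 1)) by (rewrite plus_IZR; simpl; lra).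
  apply lt_IZR in a1; apply lt_IZR in a2; lia. Qed.

Lemma cwd_lf x y X Y : in_S1 x -> in_S1 y -> lf x X -> lf y Y -> 0 <= Y - X < 1 ->
  cwd x y = Y - X.
Proof. unfold in_S1; intros hx hy [a ->] [b ->] h.
  destruct (cwd_cases x y) as [[h1 ->]|[h1 ->]].
  - assert (b - a = 0)%Z as e by (apply IZR_eq_of; rewrite minus_IZR; simpl; lra).
    assert (IZR b = IZR a) by (f_equal; lia). lra.
  - assert (b - a = 1)%Z as e by (apply IZR_eq_of; rewrite minus_IZR; simpl; lra).
    assert (IZR b = IZR a + 1) by (replace b with (a + 1)%Z by lia; rewrite plus_IZR; simpl; lra). lra.
Qed.

Lemma lf_eq x y X Y k : in_S1 x -> in_S1 y -> lf x X -> lf y Y -> Y - X = IZR k -> x = y.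
Proof. unfold in_S1; intros hx hy [a ->] [b ->] h.
  assert (k - b + a = 0)%Z as e by (apply IZR_eq_of; rewrite plus_IZR, minus_IZR; simpl; lra).
  assert (IZR k = IZR b - IZR a) by (rewrite <- minus_IZR; f_equal; lia). lra. Qed.

Lemma lf_eq0 x y X Y : in_S1 x -> in_S1 y -> lf x X -> lf y Y -> Y = X -> x = y.
Proof. intros; apply (lf_eq x y X Y 0); auto; simpl; lra. Qed.

Lemma lf_eq1 x y X Y : in_S1 x -> in_S1 y -> lf x X -> lf y Y -> Y = X + 1 -> x = y.
Proof. intros; apply (lf_eq x y X Y 1); auto; simpl; lra. Qed.

Lemma lf_neq x y X Y : in_S1 x -> in_S1 y -> lf x X -> lf y Y -> 0 < Y - X < 1 -> x <> y.
Proof. intros hx hy hX hY h e; subst y.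
  pose proof (cwd_lf x x X Y hx hy hX hY ltac:(lra)). rewrite cwd_self in H; lra. Qed.

Lemma lf_same x X Y : in_S1 x -> lf x X -> lf x Y -> 0 <= Y - X < 1 -> Y = X.
Proof. intros hx hX hY h. pose proof (cwd_lf x x X Y hx hx hX hY h). rewrite cwd_self in H; lra. Qed.

Lemma scyc_lf a b c A B C : in_S1 a -> in_S1 b -> in_S1 c -> lf a A -> lf b B -> lf c C ->
  A < B -> B < C -> C < A + 1 -> scyc a b c.
Proof. intros. unfold scyc.
  rewrite (cwd_lf a b A B), (cwd_lf a c A C); auto; lra. Qed.

Lemma wcyc_lf a b c A B C : in_S1 a -> in_S1 b -> in_S1 c -> lf a A -> lf b B -> lf c C ->
  A <= B -> B <= C -> C <= A + 1 -> wcyc a b c.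
Proof. intros. unfold wcyc.
  destruct (Req_dec A B). { left. apply (lf_eq0 a b A B); auto. }
  destruct (Req_dec B C). { right; left. apply (lf_eq0 b c B C); auto. }
  destruct (Req_dec C (A+1)). { right; right; left. symmetry. apply (lf_eq1 a c A C); auto. }
  right; right; right. apply (scyc_lf a b c A B C); auto; lra. Qed.


Lemma cyc_S1 V E x : is_cyclic V E -> V x -> in_S1 x.
Proof. intros [[h _] _]; auto. Qed.
Lemma cyc_EV V E u w : is_cyclic V E -> E u w -> V u /\ V w.
Proof. intros [[_ [h _]] _]; auto. Qed.
Lemma cyc_opp V E u w : is_cyclic V E -> E u w -> E w u -> False.
Proof. intros [[_ [_ [_ h]]] _] h1 h2; exact (h _ _ h1 h2). Qed.
Lemma cyc_mid V E a b c : is_cyclic V E -> E a c -> V b -> scyc a b c -> E a b /\ E b c.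
Proof. intros [_ h]; eauto. Qed.

Inductive WK (V : R -> Prop) (E : R -> R -> Prop) (x : R) : nat -> R -> R -> Prop :=
| WK0 : WK V E x 0 x 0
| WKS : forall m y L z, WK V E x m y L -> V z -> (z = y \/ E y z) ->
    WK V E x (S m) z (L + cwd y z).

Lemma WK0' V E x y L : y = x -> L = 0 -> WK V E x 0 y L.
Proof. intros -> ->; constructor. Qed.
Lemma WKS' V E x m y L z L' : WK V E x m y L -> V z -> (z = y \/ E y z) ->
  L' = L + cwd y z -> WK V E x (S m) z L'.
Proof. intros; subst; econstructor; eauto. Qed.

Lemma WK_V V E x m y L : V x -> WK V E x m y L -> V y.
Proof. intros hx h; induction h; auto. Qed.

Lemma WK_lf V E x m y L : WK V E x m y L -> lf y (x + L).
Proof. intros h; induction h.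
 - replace (x + 0) with x by ring; apply lf_refl.
 - replace (x + (L + cwd y z)) with ((x + L) + cwd y z) by ring; apply lf_step; auto. Qed.

Lemma WK_bnd V E x m y L : is_cyclic V E -> V x -> WK V E x m y L -> 0 <= L <= INR m.
Proof. intros hc hx h; induction h. simpl; lra.
  pose proof (WK_V _ _ _ _ _ _ hx h).
  pose proof (cwd_range y z (cyc_S1 _ _ _ hc H1) (cyc_S1 _ _ _ hc H)).
  rewrite S_INR; lra. Qed.

Lemma WK_stay V E x m y L : WK V E x m y L -> V y -> WK V E x (S m) y L.
Proof. intros; eapply WKS'; eauto. rewrite cwd_self; ring. Qed.

Lemma WK_cat V E x m y L1 n z L2 : WK V E x m y L1 -> WK V E y n z L2 ->
  WK V E x (m + n) z (L1 + L2).
Proof. intros h1 h2; induction h2.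
 - rewrite Nat.add_0_r; replace (L1 + 0) with L1 by ring; auto.
 - rewrite Nat.add_succ_r. eapply WKS'; eauto. ring. Qed.

Lemma WK_split V E x m n z L : WK V E x (m + n) z L ->
  exists y L1 L2, WK V E x m y L1 /\ WK V E y n z L2 /\ L = L1 + L2.
Proof. revert z L; induction n; intros z L h.
 - rewrite Nat.add_0_r in h. exists z, L, 0. split; auto. split. constructor. ring.
 - rewrite Nat.add_succ_r in h. inversion h; subst.
   destruct (IHn _ _ H0) as (y' & L1 & L2 & h1 & h2 & ->).
   exists y', L1, (L2 + cwd y z). split; auto. split. econstructor; eauto. ring. Qed.

Lemma chase V E u v m y L : is_cyclic V E -> V u -> V v -> WK V E u m y L ->
  exists z L', WK V E v m z L' /\ (u + L) - 1 <= (u - cwd v u) + L' <= u + L.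
Proof. intros hc hu hv h. induction h.
 - exists v, 0. split. constructor.
   pose proof (cwd_range v u (cyc_S1 _ _ _ hc hv) (cyc_S1 _ _ _ hc hu)). lra.
 - destruct IHh as (z' & L' & hw & hi).
   pose proof (WK_V _ _ _ _ _ _ hu h) as hy.
   pose proof (WK_V _ _ _ _ _ _ hv hw) as hz'.
   pose proof (WK_lf _ _ _ _ _ _ h) as ly.
   pose proof (WK_lf _ _ _ _ _ _ hw) as lz.
   assert (lz2 : lf z' ((u - cwd v u) + L')).
   { destruct (cwd_cases v u) as [[_ ->]|[_ ->]].
     - replace (u - (u - v) + L') with (v + L') by ring; auto.
     - replace (u - (u - v + 1) + L') with ((v + L') + IZR (-1)) by (simpl; ring). apply lf_add; auto. }
   assert (Sy := cyc_S1 _ _ _ hc hy). assert (Sz' := cyc_S1 _ _ _ hc hz').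
   assert (Sz := cyc_S1 _ _ _ hc H). 
   pose proof (cwd_range y z Sy Sz) as dr.
   set (P := u + L) in *. set (Q := u - cwd v u + L') in *.
   destruct (Req_dec z' y) as [e|ne].
   + subst z'. exists z, (L' + cwd y z). split. econstructor; eauto.
     unfold P, Q in *. lra.
   + assert (P - 1 < Q < P).
     { destruct (Req_dec P (Q + 1)).
       { exfalso; apply ne; apply (lf_eq1 z' y Q P); auto. }
       destruct (Req_dec Q P).
       { exfalso; apply ne; symmetry; apply (lf_eq0 y z' P Q); auto. }
       lra. }
     destruct (Rle_lt_dec (P + cwd y z - 1) Q).
     * exists z', L'. split. apply WK_stay; auto. unfold P, Q in *. lra.
     * assert (ez : E y z).
       { destruct H0 as [e|e]; auto. subst z. rewrite cwd_self in r. lra. }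
       assert (lz1 : lf z' (Q + 1)) by (replace (Q+1) with (Q + IZR 1) by (simpl; ring); apply lf_add; auto).
       assert (lzz : lf z (P + cwd y z)) by (apply lf_step; auto).
       assert (sc : scyc y z' z) by (apply (scyc_lf y z' z P (Q+1) (P + cwd y z)); auto; lra).
       destruct (cyc_mid _ _ _ _ _ hc ez hz' sc) as [_ e2].
       exists z, (L' + cwd z' z). split. econstructor; eauto.
       rewrite (cwd_lf z' z (Q+1) (P + cwd y z)); auto; try lra.
       unfold P, Q in *. lra.
Qed.

Lemma chase' V E u v m y L : is_cyclic V E -> V u -> V v -> WK V E u m y L ->
  exists z L', WK V E v m z L' /\ L - 1 <= L'.
Proof. intros hc hu hv h. destruct (chase _ _ _ _ _ _ _ hc hu hv h) as (z & L' & h1 & h2).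
  exists z, L'; split; auto.
  pose proof (cwd_range v u (cyc_S1 _ _ _ hc hv) (cyc_S1 _ _ _ hc hu)). lra. Qed.

Lemma two_step V E y z z' : is_cyclic V E -> V y -> V z -> V z' ->
  (z = y \/ E y z) -> (z' = z \/ E z z') -> cwd y z + cwd z z' < 1.
Proof. intros hc hy hz hz' s1 s2.
  assert (Sy := cyc_S1 _ _ _ hc hy). assert (Sz := cyc_S1 _ _ _ hc hz). assert (Sz' := cyc_S1 _ _ _ hc hz').
  pose proof (cwd_range y z Sy Sz). pose proof (cwd_range z z' Sz Sz').
  destruct s1 as [->|e1]. rewrite cwd_self; lra.
  destruct s2 as [->|e2]. rewrite cwd_self; lra.
  destruct (Rlt_le_dec (cwd y z + cwd z z') 1) as [|hge]; auto. exfalso.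
  set (P := y + cwd y z). set (P' := P + cwd z z').
  assert (lz : lf z P) by (apply lf_step, lf_refl).
  assert (lz' : lf z' P') by (apply lf_step; auto).
  assert (ly : lf y (y + 1)) by (replace (y+1) with (y + IZR 1) by (simpl;ring); apply lf_add, lf_refl).
  destruct (Req_dec P' (y + 1)).
  - assert (z' = y) by (symmetry; apply (lf_eq0 y z' (y+1) P'); auto).
    subst z'. eapply cyc_opp; eauto.
  - assert (sc : scyc z y z') by (apply (scyc_lf z y z' P (y+1) P'); auto; unfold P', P in *; lra).
    destruct (cyc_mid _ _ _ _ _ hc e2 hy sc) as [e3 _]. eapply cyc_opp; eauto.
Qed.

Lemma WK_half V E x m y L : is_cyclic V E -> V x -> WK V E x m y L ->
  forall y', V y' -> (y' = y \/ E y y') -> 2 * L + cwd y y' <= INR m + 1.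
Proof. intros hc hx h; induction h; intros y' hy' s.
 - simpl. pose proof (cwd_range x y' (cyc_S1 _ _ _ hc hx) (cyc_S1 _ _ _ hc hy')). lra.
 - pose proof (WK_V _ _ _ _ _ _ hx h) as hy.
   specialize (IHh z H H0).
   pose proof (two_step _ _ _ _ _ hc hy H hy' H0 s). rewrite S_INR. lra. Qed.

Lemma WK_halfb V E x m y L : is_cyclic V E -> V x -> WK V E x m y L -> 2 * L <= INR m + 1.
Proof. intros hc hx h. pose proof (WK_half _ _ _ _ _ _ hc hx h y (WK_V _ _ _ _ _ _ hx h) (or_introl eq_refl)).
  rewrite cwd_self in H; lra. Qed.


Lemma lub_ub S g x : is_lub S g -> S x -> x <= g.
Proof. intros [h _] hx; apply h; auto. Qed.
Lemma lub_le S g b : is_lub S g -> (forall x, S x -> x <= b) -> g <= b.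
Proof. intros [_ h] hb; apply h; intros x hx; auto. Qed.
Lemma lub_approx S g eps : is_lub S g -> 0 < eps -> exists x, S x /\ g - eps < x.
Proof. intros hl he. apply NNPP; intro hn.
  assert (g <= g - eps); [|lra]. apply (lub_le S g); auto.
  intros x hx. destruct (Rle_lt_dec x (g - eps)); auto. exfalso; apply hn; eauto. Qed.

Lemma rsum_ext f g n : (forall i, (i < n)%nat -> f i = g i) -> rsum f n = rsum g n.
Proof. induction n; simpl; intros h; auto. rewrite IHn, h; auto. Qed.

Definition fwalk (V : R -> Prop) (E : R -> R -> Prop) (c : nat -> R) (M : nat) :=
  forall i, (i < M)%nat -> V (c (S i)) /\ (c (S i) = c i \/ E (c i) (c (S i))).

Definition dd (c : nat -> R) (i : nat) := cwd (c i) (c (S i)).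

Lemma fw_WK V E c M : fwalk V E c M -> forall a b, (a + b <= M)%nat ->
  WK V E (c a) b (c (a + b)%nat) (rsum (dd c) (a + b) - rsum (dd c) a).
Proof. intros hw a b; induction b; intros hb.
 - apply WK0'. rewrite Nat.add_0_r; auto. rewrite Nat.add_0_r; ring.
 - rewrite Nat.add_succ_r. destruct (hw (a + b)%nat ltac:(lia)) as [h1 h2].
   eapply WKS'. apply IHb; lia. auto. auto. simpl. unfold dd at 2. ring. Qed.

Lemma WK_fw V E x m y L : WK V E x m y L ->
  exists c, c O = x /\ c m = y /\ fwalk V E c m /\ L = rsum (dd c) m.
Proof. intros h; induction h.
 - exists (fun _ => x). split; [auto|split;[auto|split;[intros i0 hi; lia|reflexivity]]].
 - destruct IHh as (c & h0 & hm & hw & hL).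
   exists (fun i => if Nat.eqb i (S m) then z else c i).
   assert (hne : forall i, (i <= m)%nat -> Nat.eqb i (S m) = false) by (intros; apply Nat.eqb_neq; lia).
   split. rewrite hne by lia; auto. split. rewrite Nat.eqb_refl; auto.
   split.
   + intros i hi. destruct (Nat.eq_dec i m) as [->|ne].
     * rewrite Nat.eqb_refl, hne by lia. rewrite hm. auto.
     * rewrite !hne by lia. apply hw; lia.
   + simpl. rewrite hL. unfold dd at 3. rewrite Nat.eqb_refl, hne by lia. rewrite hm. f_equal.
     apply rsum_ext. intros i hi. unfold dd. rewrite !hne by lia. auto. Qed.

Lemma wls_WK V E m x r : walk_len_set V E m x r <-> exists y, WK V E x m y r.
Proof. split.
 - intros (c & h0 & hw & hr). exists (c m).
   pose proof (fw_WK V E c m hw 0 m ltac:(lia)). simpl in H. rewrite h0 in H.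
   rewrite hr; replace (rsum (fun i => cwd (c i) (c (S i))) m) with (rsum (dd c) m - 0) by (unfold dd; ring). auto.
 - intros (y & h). destruct (WK_fw _ _ _ _ _ _ h) as (c & h0 & hm & hw & hL).
   exists c. split; auto. Qed.

Lemma WK_const V E x m : V x -> WK V E x m x 0.
Proof. intros hx; induction m. constructor. apply WK_stay; auto. Qed.


Definition GAM V E v (a : nat -> R) := forall m, is_lub (walk_len_set V E m v) (a m).

Lemma a_elt V E v a m y L : GAM V E v a -> WK V E v m y L -> L <= a m.
Proof. intros hg h. apply (lub_ub _ _ _ (hg m)). apply wls_WK; eauto. Qed.

Lemma a_approx V E v a m eps : GAM V E v a -> 0 < eps -> exists y L, WK V E v m y L /\ a m - eps < L.
Proof. intros hg he. destruct (lub_approx _ _ _ (hg m) he) as (x & hx & h).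
  apply wls_WK in hx. destruct hx as [y hy]. eauto. Qed.

Lemma a_nonneg V E v a m : GAM V E v a -> V v -> 0 <= a m.
Proof. intros hg hv. apply (a_elt V E v a m v 0 hg). apply WK_const; auto. Qed.

Lemma a_half V E v a m : is_cyclic V E -> GAM V E v a -> V v -> 2 * a m <= INR m + 1.
Proof. intros hc hg hv. assert (a m <= (INR m + 1)/2); [|lra].
  apply (lub_le _ _ _ (hg m)). intros x hx. apply wls_WK in hx. destruct hx as [y hy].
  pose proof (WK_halfb _ _ _ _ _ _ hc hv hy). lra. Qed.

Lemma a_chase V E v a m u y L : is_cyclic V E -> GAM V E v a -> V v -> V u -> WK V E u m y L ->
  L <= a m + 1.
Proof. intros hc hg hv hu h. destruct (chase' _ _ _ _ _ _ _ hc hu hv h) as (z & L' & h1 & h2).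
  pose proof (a_elt _ _ _ _ _ _ _ hg h1). lra. Qed.

Lemma a_sup V E v a m n : is_cyclic V E -> GAM V E v a -> V v -> a m + a n - 1 <= a (m + n)%nat.
Proof. intros hc hg hv.
  apply Rnot_lt_le; intro hlt.
  set (eps := (a m + a n - 1 - a (m+n)%nat) / 3).
  assert (he : 0 < eps) by (unfold eps; lra).
  destruct (a_approx _ _ _ _ m eps hg he) as (y & L1 & h1 & e1).
  destruct (a_approx _ _ _ _ n eps hg he) as (z & L2 & h2 & e2).
  pose proof (WK_V _ _ _ _ _ _ hv h1) as hy.
  destruct (chase' _ _ _ _ _ _ _ hc hv hy h2) as (z' & L2' & h3 & e3).
  pose proof (WK_cat _ _ _ _ _ _ _ _ _ h1 h3).
  pose proof (a_elt _ _ _ _ _ _ _ hg H). unfold eps in *. lra. Qed.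

Lemma a_sub V E v a m n : is_cyclic V E -> GAM V E v a -> V v -> a (m + n)%nat <= a m + a n + 1.
Proof. intros hc hg hv. apply (lub_le _ _ _ (hg (m+n)%nat)). intros x hx.
  apply wls_WK in hx. destruct hx as [z hz].
  destruct (WK_split _ _ _ _ _ _ _ hz) as (y & L1 & L2 & h1 & h2 & ->).
  pose proof (a_elt _ _ _ _ _ _ _ hg h1).
  pose proof (a_chase _ _ _ _ _ _ _ _ hc hg hv (WK_V _ _ _ _ _ _ hv h1) h2). lra. Qed.

Lemma a_sub_iter V E v a q N : is_cyclic V E -> GAM V E v a -> V v ->
  a (S N * q)%nat + 1 <= INR (S N) * (a q + 1).
Proof. intros hc hg hv. induction N.
 - simpl. replace (q + 0)%nat with q by lia. lra.
 - replace (S (S N) * q)%nat with (q + S N * q)%nat by lia.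
   pose proof (a_sub _ _ _ _ q (S N*q)%nat hc hg hv). rewrite (S_INR (S N)). lra. Qed.

Lemma a_sup_iter V E v a q N : is_cyclic V E -> GAM V E v a -> V v ->
  INR (S N) * (a q - 1) <= a (S N * q)%nat - 1.
Proof. intros hc hg hv. induction N.
 - simpl. replace (q + 0)%nat with q by lia. lra.
 - replace (S (S N) * q)%nat with (q + S N * q)%nat by lia.
   pose proof (a_sup _ _ _ _ q (S N*q)%nat hc hg hv). rewrite (S_INR (S N)). lra. Qed.

Lemma a_zero V E v a : GAM V E v a -> a 0%nat = 0.
Proof. intros hg. apply Rle_antisym.
 - apply (lub_le _ _ _ (hg 0%nat)). intros x hx.
   apply wls_WK in hx. destruct hx as [z hz]. inversion hz; subst; lra.
 - apply (lub_ub _ _ _ (hg 0%nat)). apply wls_WK. exists v. constructor. Qed.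


Definition gl (h : nat -> R) (i : nat) : R := h O + rsum (dd h) i.

Lemma gl_S h i : gl h (S i) = gl h i + cwd (h i) (h (S i)).
Proof. unfold gl; simpl; unfold dd; ring. Qed.

Lemma gl_lf h i : lf (h i) (gl h i).
Proof. induction i. unfold gl; simpl. replace (h 0%nat + 0) with (h 0%nat) by ring. apply lf_refl.
  rewrite gl_S. apply lf_step; auto. Qed.

Lemma gl_mono V E h : is_cyclic V E -> (forall i, V (h i)) -> forall i j, gl h i <= gl h (i + j).
Proof. intros hc hV i j. induction j. rewrite Nat.add_0_r; lra.
  rewrite Nat.add_succ_r, gl_S.
  pose proof (cwd_range (h (i+j)%nat) (h (S (i+j))) (cyc_S1 _ _ _ hc (hV _)) (cyc_S1 _ _ _ hc (hV _))). lra. Qed.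

Lemma gl_step V E h : is_cyclic V E -> (forall i, V (h i)) -> forall i, gl h (S i) - gl h i < 1.
Proof. intros hc hV i. rewrite gl_S.
  pose proof (cwd_range (h i) (h (S i)) (cyc_S1 _ _ _ hc (hV _)) (cyc_S1 _ _ _ hc (hV _))). lra. Qed.

Lemma gl_per h n : (forall i, h (i + n)%nat = h i) -> forall i, gl h (i + n) - gl h i = gl h n - gl h 0.
Proof. intros hp i. induction i. simpl; ring.
  replace (S i + n)%nat with (S (i + n)) by lia. rewrite !gl_S.
  replace (S (i + n)) with (S i + n)%nat by lia. rewrite !hp. lra. Qed.

Lemma gl_perN h n : (forall i, h (i + n)%nat = h i) -> forall N i,
  gl h (i + N * n) = gl h i + INR N * (gl h n - gl h 0).
Proof. intros hp N; induction N; intros i. simpl; rewrite Nat.add_0_r; ring.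
  replace (i + S N * n)%nat with ((i + N * n) + n)%nat by lia.
  pose proof (gl_per h n hp (i + N*n)%nat). rewrite S_INR. rewrite IHN in H. lra. Qed.

Lemma winding V E h n k : is_cyclic V E -> (1 <= k)%nat -> (0 < n)%nat ->
  (forall i, V (h i)) -> (forall i, h (i + n)%nat = h i) ->
  (forall j s, (1 <= s <= k)%nat -> h j = h (j + s)%nat \/ E (h j) (h (j + s)%nat)) ->
  (exists i, h i <> h O) ->
  forall q, exists y L, WK V E (h O) (q * n) y L /\ INR (q * k) <= L.
Proof. intros hc hk hn hV hp he hnc q.
  set (g := gl h).
  assert (S1 : forall i, in_S1 (h i)) by (intros; apply (cyc_S1 _ _ _ hc (hV i))).
  assert (mono : forall i j, (i <= j)%nat -> g i <= g j).
  { intros i j hij. replace j with (i + (j - i))%nat by lia. apply (gl_mono V E); auto. }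
  assert (stp := gl_step V E h hc hV).
  set (D := g n - g O).
  assert (hD : exists z, D = IZR z).
  { destruct (gl_lf h n) as [z hz]. exists z. unfold D, g. rewrite hz.
    replace n with (0 + n)%nat at 1 by lia. rewrite hp. unfold gl; simpl; ring. }
  assert (perN : forall N i, g (i + N * n)%nat = g i + INR N * D) by (intros; apply gl_perN; auto).
  assert (D1 : 1 <= D).
  { destruct hD as [z hz]. assert (D0 : 0 <= D) by (unfold D; pose proof (mono O n ltac:(lia)); lra).
    assert (z <> 0%Z).
    { intro ez. subst z. simpl in hz. destruct hnc as [i hi]. apply hi.
      assert (g i = g O).
      { apply Rle_antisym. 2: apply mono; lia.
        pose proof (mono i (0 + i * n)%nat ltac:(nia)). rewrite perN, hz in H. lra. }
      symmetry. apply (lf_eq0 (h O) (h i) (g O) (g i)); auto; apply gl_lf. }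
    rewrite hz in D0 |- *. apply IZR_le. apply le_IZR in D0. lia. }
  assert (nw : forall i s, (s <= k)%nat -> g (i + s)%nat - g i < 1).
  { intros i s; induction s; intros hs. rewrite Nat.add_0_r; lra.
    specialize (IHs ltac:(lia)).
    destruct (Rlt_le_dec (g (i + S s)%nat - g i) 1) as [|hge]; auto. exfalso.
    set (A := g i) in *. set (C := g (i + s)%nat) in *. set (B := g (i + S s)%nat) in *.
    assert (BC : B - C < 1) by (unfold B, C; rewrite Nat.add_succ_r; apply stp).
    assert (CA : A <= C) by (apply mono; lia).
    assert (la : lf (h i) A) by apply gl_lf. assert (lb : lf (h (i + S s)%nat) B) by apply gl_lf.
    assert (lc : lf (h (i + s)%nat) C) by apply gl_lf.
    destruct (Req_dec C A) as [eCA|nCA]. lra.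
    assert (hs1 : (1 <= s)%nat). { destruct s. exfalso; apply nCA; unfold C, A; rewrite Nat.add_0_r; auto. lia. }
    assert (ac : E (h i) (h (i + s)%nat)).
    { destruct (he i s ltac:(lia)) as [e|e]; auto. exfalso.
      apply (lf_neq (h i) (h (i+s)%nat) A C); auto; lra. }
    assert (cb : E (h (i + s)%nat) (h (i + S s)%nat)).
    { destruct (he (i + s)%nat 1%nat ltac:(lia)) as [e|e]; replace (i + s + 1)%nat with (i + S s)%nat in e by lia; auto.
      exfalso. apply (lf_neq (h (i+s)%nat) (h (i + S s)%nat) C B); auto; lra. }
    destruct (Req_dec B (A + 1)) as [eB|nB].
    + assert (h (i + S s)%nat = h i) by (symmetry; apply (lf_eq1 (h i) _ A B); auto).
      rewrite H in cb. eapply cyc_opp; eauto.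
    + assert (lb' : lf (h (i + S s)%nat) (B - 1)).
      { replace (B - 1) with (B + IZR (-1)) by (simpl; ring). apply lf_add; auto. }
      assert (sc : scyc (h i) (h (i + S s)%nat) (h (i + s)%nat)).
      { apply (scyc_lf _ _ _ A (B - 1) C); auto; lra. }
      destruct (cyc_mid _ _ _ _ _ hc ac (hV _) sc) as [_ bc]. eapply cyc_opp; eauto. }
  assert (wk : forall t, WK V E (h O) t (h (t * k)%nat) (g (t * k)%nat - g O)).
  { intros t; induction t. apply WK0'. auto. simpl; ring.
    replace (S t * k)%nat with (t * k + k)%nat by lia.
    eapply WKS'. apply IHt. auto. 
    destruct (he (t * k)%nat k ltac:(lia)) as [e|e]; auto.
    rewrite (cwd_lf _ _ (g (t * k)%nat) (g (t * k + k)%nat)); try apply gl_lf; auto.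
    ring. split. assert (g (t * k)%nat <= g (t * k + k)%nat) by (apply mono; lia). lra. apply nw; lia. }
  exists (h (q * n * k)%nat), (g (q * n * k)%nat - g O). split. apply wk.
  replace (q * n * k)%nat with (0 + (q * k) * n)%nat by lia. rewrite perN.
  assert (0 <= INR (q * k)) by apply pos_INR. nra.
Qed.


Lemma div_le_div k n b q : 0 < n -> 0 < q -> k * q <= n * b -> k / n <= b / q.
Proof. intros hn hq h.
  replace (k / n) with ((k * q) * / (n * q)) by (field; lra).
  replace (b / q) with ((n * b) * / (n * q)) by (field; lra).
  apply Rmult_le_compat_r; auto. left; apply Rinv_0_lt_compat; nra. Qed.

Lemma mod_add_n i n : ((i + n) mod n = i mod n)%nat.
Proof. replace (i + n)%nat with (i + 1 * n)%nat by lia. apply Nat.Div0.mod_add. Qed.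

Lemma dicycle_C n k : (1 <= k)%nat -> (0 < n)%nat -> has_dicycle (CV n) (CE n k).
Proof. intros hk hn. exists (fun i => INR (i mod n) / INR n), n. split; auto. split.
  - intros i. rewrite mod_add_n; auto.
  - intros i. split. exists (i mod n)%nat. split; auto. apply Nat.mod_upper_bound; lia.
    exists (i mod n)%nat, 1%nat. split. apply Nat.mod_upper_bound; lia. split. lia. split; auto.
    rewrite Nat.Div0.add_mod_idemp_l. replace (i + 1)%nat with (S i) by lia. auto. Qed.

Lemma D1_elt V E v a W r q : is_cyclic V E -> GAM V E v a -> V v -> (forall x, W x -> V x) ->
  wf_fin_set (ind_V V W) (ind_E E W) r -> (1 <= q)%nat -> r <= (a q + 1) / INR q.
Proof. intros hc hg hv hW (n & k & hkn & -> & f & hf1 & hf2 & hf3 & hf4) hq.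
  assert (hq' : 0 < INR q) by (apply lt_0_INR; lia).
  assert (hn : (0 < n)%nat) by lia. assert (hn' : 0 < INR n) by (apply lt_0_INR; lia).
  pose proof (a_nonneg _ _ _ _ q hg hv).
  destruct k as [|k'].
  { simpl. unfold Rdiv. rewrite Rmult_0_l. apply Rmult_le_pos. lra. left; apply Rinv_0_lt_compat; auto. }
  set (k := S k') in *.
  set (h := fun i => f (INR (i mod n) / INR n)).
  assert (hV : forall i, V (h i)).
  { intros i. destruct (hf1 (INR (i mod n) / INR n)) as [h1 _]; auto.
    exists (i mod n)%nat. split; auto. apply Nat.mod_upper_bound; lia. }
  assert (hp : forall i, h (i + n)%nat = h i) by (intros; unfold h; rewrite mod_add_n; auto).
  assert (he : forall j s, (1 <= s <= k)%nat -> h j = h (j + s)%nat \/ E (h j) (h (j + s)%nat)).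
  { intros j s hs. unfold h.
    rewrite <- (Nat.Div0.add_mod_idemp_l j s n).
    destruct (hf2 (INR (j mod n) / INR n) (INR ((j mod n + s) mod n) / INR n)) as [e|[e _]]; auto.
    exists (j mod n)%nat, s. split. apply Nat.mod_upper_bound; lia. split; auto. }
  assert (hnc : exists i, h i <> h O).
  { destruct (hf4 (dicycle_C n k ltac:(unfold k; lia) hn)) as (x & y & [i [hi ->]] & [j [hj ->]] & ne).
    destruct (Req_dec (h i) (h O)) as [e|e].
    - exists j. unfold h. rewrite (Nat.mod_small j n hj). intro e'. apply ne. unfold h in e.
      rewrite (Nat.mod_small i n hi) in e. congruence.
    - exists i. auto. }
  destruct (winding V E h n k hc ltac:(unfold k; lia) hn hV hp he hnc q) as (y & L & hw & hL).
  pose proof (a_chase _ _ _ _ _ _ _ _ hc hg hv (hV O) hw).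
  destruct n as [|n']. lia.
  pose proof (a_sub_iter _ _ _ _ q n' hc hg hv).
  replace (S n' * q)%nat with (q * S n')%nat in H1 by lia.
  apply div_le_div; auto. rewrite mult_INR in hL. lra.
Qed.


Fixpoint minf (f : nat -> R) (A : nat) : R :=
  match A with O => f O | S A' => Rmin (minf f A') (f (S A')) end.

Lemma minf_le f A a : (a <= A)%nat -> minf f A <= f a.
Proof. induction A; intros h; simpl.
 - replace a with O by lia; lra.
 - destruct (Nat.eq_dec a (S A)) as [->|ne]. apply Rmin_r.
   eapply Rle_trans. apply Rmin_l. apply IHA; lia. Qed.

Lemma minf_att f A : exists a, (a <= A)%nat /\ minf f A = f a.
Proof. induction A; simpl. exists O; split; auto.
  destruct IHA as (a & ha & e). unfold Rmin. destruct (Rle_dec (minf f A) (f (S A))).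
  exists a; split; auto. exists (S A); split; auto. Qed.

Lemma minf_mono f g A : (forall a, f a <= g a) -> minf f A <= minf g A.
Proof. intros h; induction A; simpl; auto.
  unfold Rmin. destruct (Rle_dec (minf f A) (f (S A))), (Rle_dec (minf g A) (g (S A)));
  specialize (h (S A)); lra. Qed.

Lemma minf_shift f g A : (forall a, g a = f a + 1) -> minf g A = minf f A + 1.
Proof. intros h; induction A; simpl; auto.
  rewrite IHA, h. unfold Rmin. destruct (Rle_dec (minf f A + 1) (f (S A) + 1)), (Rle_dec (minf f A) (f (S A))); lra. Qed.

Lemma zdiv_bounds x n : (0 < n)%nat ->
  IZR (x / Z.of_nat n) <= IZR x / INR n < IZR (x / Z.of_nat n) + 1.
Proof. intros hn. assert (hz : (0 < Z.of_nat n)%Z) by lia.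
  pose proof (Z.div_mod x (Z.of_nat n) ltac:(lia)) as e.
  pose proof (Z.mod_pos_bound x (Z.of_nat n) hz) as [b1 b2].
  set (qq := (x / Z.of_nat n)%Z) in *. set (rr := (x mod Z.of_nat n)%Z) in *.
  assert (ex : IZR x = INR n * IZR qq + IZR rr) by (rewrite e, plus_IZR, mult_IZR, INR_IZR_INZ; auto).
  apply IZR_le in b1. apply IZR_lt in b2. rewrite <- INR_IZR_INZ in b2.
  assert (0 < INR n) by (apply lt_0_INR; lia).
  rewrite ex. split.
  - apply (Rmult_le_reg_r (INR n)); auto. unfold Rdiv. rewrite Rmult_assoc, Rinv_l by lra. nra.
  - apply (Rmult_lt_reg_r (INR n)); auto. unfold Rdiv. rewrite Rmult_assoc, Rinv_l by lra. nra. Qed.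

Definition frac (y : R) : R := y - IZR (Int_part y).

Lemma Int_part_lf x m : in_S1 x -> Int_part (x + IZR m) = m.
Proof. unfold in_S1; intros hx. destruct (base_Int_part (x + IZR m)) as [h1 h2].
  apply IZR_eq_of. lra. Qed.

Lemma frac_lf x X : in_S1 x -> lf x X -> frac X = x.
Proof. intros hx [m ->]. unfold frac. rewrite Int_part_lf; auto. ring. Qed.

Lemma Int_part_IZR z : Int_part (IZR z) = z.
Proof. destruct (base_Int_part (IZR z)) as [h1 h2]. apply IZR_eq_of. lra. Qed.


Lemma cwd_idx i1 i2 n : (i1 < n)%nat -> (i2 < n)%nat ->
  cwd (INR i1 / INR n) (INR i2 / INR n) = (INR (if Nat.leb i1 i2 then i2 else i2 + n) - INR i1) / INR n.
Proof. intros h1 h2. assert (hn : 0 < INR n) by (apply lt_0_INR; lia).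
  destruct (Nat.leb_spec i1 i2) as [l|l].
  - unfold cwd. destruct (Rle_dec (INR i1 / INR n) (INR i2 / INR n)) as [|n0]. field; lra.
    exfalso; apply n0. apply Rmult_le_compat_r. left; apply Rinv_0_lt_compat; auto. apply le_INR; auto.
  - unfold cwd. destruct (Rle_dec (INR i1 / INR n) (INR i2 / INR n)) as [r|].
    + exfalso. apply lt_INR in l. assert (INR i2 / INR n < INR i1 / INR n); [|lra].
      apply Rmult_lt_compat_r; auto. apply Rinv_0_lt_compat; auto.
    + rewrite plus_INR. field; lra. Qed.

Lemma in_S1_idx i n : (i < n)%nat -> in_S1 (INR i / INR n).
Proof. intros h. assert (hn : 0 < INR n) by (apply lt_0_INR; lia). apply lt_INR in h. split.
  apply Rmult_le_pos. apply pos_INR. left; apply Rinv_0_lt_compat; auto.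
  apply (Rmult_lt_reg_r (INR n)); auto. unfold Rdiv. rewrite Rmult_assoc, Rinv_l by lra. lra. Qed.

Lemma fwalk_V V E c M a : V (c O) -> fwalk V E c M -> (a <= M)%nat -> V (c a).
Proof. intros h0 hw ha. destruct a; auto. apply (hw a); lia. Qed.

Lemma hom_build V E c M n k (r0 C : R) : is_cyclic V E -> V (c O) -> fwalk V E c M -> (2 * k < n)%nat ->
  (forall a, (a <= M)%nat -> INR a * r0 - C <= gl c a - gl c O) ->
  INR k / INR n < r0 -> C + 1 < INR M * (r0 - INR k / INR n) ->
  exists W, (forall x, W x -> V x) /\ finite_set W /\
    wf_fin_set (ind_V V W) (ind_E E W) (INR k / INR n).
Proof. intros hc h0 hw hkn hpre hr hM.
  assert (hn : (0 < n)%nat) by lia. assert (hn' : 0 < INR n) by (apply lt_0_INR; lia).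
  set (P := gl c).
  set (val := fun a j => P a - IZR ((Z.of_nat (a * k) - Z.of_nat j) / Z.of_nat n)).
  set (Zf := fun j => minf (fun a => val a j) M).
  assert (cV : forall a, (a <= M)%nat -> V (c a)) by (intros; apply (fwalk_V V E c M); auto).
  assert (cS : forall a, (a <= M)%nat -> in_S1 (c a)) by (intros; apply (cyc_S1 V E); auto).
  assert (vlf : forall a j, lf (c a) (val a j)).
  { intros. unfold val. unfold Rminus. rewrite <- opp_IZR. apply lf_add. apply gl_lf. }
  assert (vlow : forall a j, P a - (INR (a * k) - INR j) / INR n <= val a j).
  { intros a j. unfold val. pose proof (zdiv_bounds (Z.of_nat (a * k) - Z.of_nat j) n hn) as [b _].
    rewrite minus_IZR, <- !INR_IZR_INZ in b. lra. }
  assert (v0up : forall j, val O j < P O + INR j / INR n + 1).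
  { intros j. unfold val. pose proof (zdiv_bounds (Z.of_nat (0 * k) - Z.of_nat j) n hn) as [_ b].
    replace (Z.of_nat (0 * k) - Z.of_nat j)%Z with (- Z.of_nat j)%Z in * by lia.
    rewrite opp_IZR, <- INR_IZR_INZ in b.
    assert (- INR j / INR n = - (INR j / INR n)) by (field; lra). lra. }
  assert (vM : forall j, val O j < val M j).
  { intros j. pose proof (vlow M j). pose proof (v0up j). pose proof (hpre M (le_n M)).
    fold P in H1. rewrite mult_INR in H.
    replace (P M - (INR M * INR k - INR j) / INR n) with
        (P M - INR M * (INR k / INR n) + INR j / INR n) in H by (field; lra). nra. }
  assert (Zarg : forall j, exists a, (a < M)%nat /\ Zf j = val a j).
  { intros j. destruct (minf_att (fun a => val a j) M) as (a & ha & e).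
    exists a. split; auto. destruct (Nat.eq_dec a M) as [->|]; try lia.
    exfalso. pose proof (minf_le (fun a => val a j) M O ltac:(lia)). fold (Zf j) in H, e.
    pose proof (vM j). lra. }
  assert (Zmono1 : forall j, Zf j <= Zf (S j)).
  { intros j. apply minf_mono. intros a. unfold val. apply Rplus_le_compat_l, Ropp_le_contravar.
    apply IZR_le. apply Z.div_le_mono. lia. lia. }
  assert (Zmono : forall j j', (j <= j')%nat -> Zf j <= Zf j').
  { intros j j' hj. induction hj. lra. eapply Rle_trans. apply IHhj. apply Zmono1. }
  assert (Zper : forall j, Zf (j + n)%nat = Zf j + 1).
  { intros j. apply minf_shift. intros a. unfold val.
    replace (Z.of_nat (a * k) - Z.of_nat (j + n))%Z with
        ((Z.of_nat (a * k) - Z.of_nat j) + (-1) * Z.of_nat n)%Z by lia.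
    rewrite Z.div_add by lia. rewrite plus_IZR. simpl. ring. }
  assert (Zstep : forall j a, Zf j = val a j -> (a < M)%nat ->
            Zf (j + k)%nat <= Zf j + (P (S a) - P a)).
  { intros j a e ha. rewrite e. eapply Rle_trans. apply (minf_le (fun a => val a (j + k)%nat) M (S a)); lia.
    simpl. unfold val.
    replace (Z.of_nat (S a * k) - Z.of_nat (j + k))%Z with (Z.of_nat (a * k) - Z.of_nat j)%Z by lia.
    lra. }
  set (vtx := fun j => frac (Zf j)).
  assert (vinfo : forall j, exists a, (a < M)%nat /\ Zf j = val a j /\ vtx j = c a).
  { intros j. destruct (Zarg j) as (a & ha & e). exists a. split; auto. split; auto.
    unfold vtx. rewrite e. apply frac_lf. apply cS; lia. auto. }
  assert (vtxV : forall j, V (vtx j)).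
  { intros j. destruct (vinfo j) as (a & ha & _ & ->). apply cV; lia. }
  assert (vS : forall j, in_S1 (vtx j)) by (intros; apply (cyc_S1 V E); auto).
  assert (vlfZ : forall j, lf (vtx j) (Zf j)).
  { intros j. destruct (vinfo j) as (a & ha & e & ->). rewrite e; auto. }
  assert (vper : forall j, vtx (j + n)%nat = vtx j).
  { intros j. unfold vtx at 1. apply frac_lf; auto. rewrite Zper.
    replace (Zf j + 1) with (Zf j + IZR 1) by (simpl; ring). apply lf_add; auto. }
  assert (vperN : forall N j, vtx (j + N * n)%nat = vtx j).
  { intros N; induction N; intros j. rewrite Nat.add_0_r; auto.
    replace (j + S N * n)%nat with ((j + N * n) + n)%nat by lia. rewrite vper; auto. }
  assert (vmod : forall j, vtx (j mod n)%nat = vtx j).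
  { intros j. rewrite (Nat.div_mod_eq j n) at 2. replace (n * (j / n) + j mod n)%nat with (j mod n + (j / n) * n)%nat by lia.
    rewrite vperN; auto. }
  assert (vedge : forall j s, (1 <= s <= k)%nat -> vtx j = vtx (j + s)%nat \/ E (vtx j) (vtx (j + s)%nat)).
  { intros j s hs. destruct (vinfo j) as (a & ha & e & ev).
    set (A := Zf j). set (B := Zf (j + s)%nat). set (Pn := Zf j + (P (S a) - P a)).
    assert (AB : A <= B) by (apply Zmono; lia).
    assert (BP : B <= Pn) by (eapply Rle_trans; [apply Zmono; instantiate (1 := (j + k)%nat); lia | apply Zstep; auto]).
    assert (PnA : Pn - A = cwd (c a) (c (S a))) by (unfold Pn, A, P; rewrite gl_S; ring).
    pose proof (cwd_range (c a) (c (S a)) (cS a ltac:(lia)) (cS (S a) ltac:(lia))) as cr.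
    assert (lPn : lf (c (S a)) Pn).
    { unfold Pn, A. rewrite e. unfold val.
      replace (P a - IZR ((Z.of_nat (a * k) - Z.of_nat j) / Z.of_nat n) + (P (S a) - P a)) with
        (P (S a) + IZR (- ((Z.of_nat (a * k) - Z.of_nat j) / Z.of_nat n))) by (rewrite opp_IZR; ring).
      apply lf_add, gl_lf. }
    assert (lA : lf (c a) A) by (unfold A; rewrite <- ev; auto).
    destruct (Req_dec B A) as [eBA|nBA].
    { left. rewrite ev. apply (lf_eq0 (c a) (vtx (j+s)%nat) A B); auto. apply cS; lia. }
    destruct (hw a ha) as [_ st].
    assert (Ey : E (c a) (c (S a))).
    { destruct st as [st|st]; auto. exfalso. rewrite st, cwd_self in PnA. lra. }
    right. rewrite ev.
    destruct (Req_dec B Pn) as [eB|nB].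
    { replace (vtx (j + s)%nat) with (c (S a)); auto.
      apply (lf_eq0 (c (S a)) (vtx (j+s)%nat) Pn B); auto. }
    assert (sc : scyc (c a) (vtx (j + s)%nat) (c (S a))).
    { apply (scyc_lf _ _ _ A B Pn); auto; try apply cS; try lia; lra. }
    destruct (cyc_mid _ _ _ _ _ hc Ey (vtxV _) sc); auto. }
  assert (nonc : (1 <= k)%nat -> exists i, (i < n)%nat /\ vtx i <> vtx O).
  { intros hk. apply NNPP. intros hne.
    assert (all : forall i, (i <= n)%nat -> vtx i = vtx O).
    { intros i hi. destruct (Nat.eq_dec i n) as [->|]. replace n with (0 + n)%nat by lia. apply vper.
      apply NNPP; intro hh; apply hne; exists i; split; auto; lia. }
    assert (Zc : forall i, (i <= n)%nat -> Zf i = Zf O).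
    { intros i; induction i; intros hi; auto.
      rewrite <- IHi by lia. destruct (vinfo i) as (a & ha & e & _).
      apply (lf_same (vtx O)); auto.
      rewrite <- (all i) by lia; auto. rewrite <- (all (S i)) by lia; auto.
      pose proof (Zmono1 i). split. lra.
      assert (Zf (S i) <= Zf (i + k)%nat) by (apply Zmono; lia).
      pose proof (Zstep i a e ha). unfold P in H1. rewrite gl_S in H1.
      pose proof (cwd_range (c a) (c (S a)) (cS a ltac:(lia)) (cS (S a) ltac:(lia))). lra. }
    pose proof (Zc n (le_n n)). pose proof (Zper O). simpl in H0. lra. }
  set (f := fun x => vtx (Z.to_nat (Int_part (x * INR n)))).
  assert (fidx : forall i, f (INR i / INR n) = vtx i).
  { intros i. unfold f. replace (INR i / INR n * INR n) with (INR i) by (field; lra).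
    rewrite INR_IZR_INZ, Int_part_IZR, Nat2Z.id. auto. }
  set (W := fun x => exists i, (i < n)%nat /\ x = vtx i).
  exists W. split. { intros x (i & _ & ->); auto. }
  split.
  { exists (map vtx (seq 0 n)). intros x (i & hi & ->). apply in_map. apply in_seq. lia. }
  exists n, k. split; auto. split; auto. exists f.
  split; [|split; [|split]].
  - intros x (i & hi & ->). rewrite fidx. split; auto. exists i; auto.
  - intros x y (i & s & hi & hs & -> & ->). rewrite !fidx. rewrite vmod.
    destruct (vedge i s hs) as [e|e]; [left; auto | right].
    split; auto. split. exists i; auto. exists ((i + s) mod n)%nat. split. apply Nat.mod_upper_bound; lia. rewrite vmod; auto.
  - intros x y z (i1 & h1 & ->) (i2 & h2 & ->) (i3 & h3 & ->) hwc.
    destruct hwc as [e|[e|[e|sc]]].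
    + left. rewrite e; auto.
    + right; left. rewrite e; auto.
    + right; right; left. rewrite e; auto.
    + rewrite !fidx. unfold scyc in sc. rewrite !cwd_idx in sc by auto.
      set (j2 := if Nat.leb i1 i2 then i2 else (i2 + n)%nat) in *.
      set (j3 := if Nat.leb i1 i3 then i3 else (i3 + n)%nat) in *.
      assert (v2 : vtx j2 = vtx i2) by (unfold j2; destruct (Nat.leb i1 i2); auto).
      assert (v3 : vtx j3 = vtx i3) by (unfold j3; destruct (Nat.leb i1 i3); auto).
      assert (b3 : (j3 < i1 + n)%nat) by (unfold j3; destruct (Nat.leb_spec i1 i3); lia).
      destruct sc as [s1 s2].
      assert (INR i1 < INR j2 /\ INR j2 < INR j3).
      { split.
        - apply (Rmult_lt_reg_r (/ INR n)). apply Rinv_0_lt_compat; auto.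
          unfold Rdiv in s1. nra.
        - apply (Rmult_lt_reg_r (/ INR n)). apply Rinv_0_lt_compat; auto.
          unfold Rdiv in s2. nra. }
      destruct H as [l1 l2]. apply INR_lt in l1. apply INR_lt in l2.
      rewrite <- v2, <- v3.
      apply (wcyc_lf _ _ _ (Zf i1) (Zf j2) (Zf j3)); auto.
      apply Zmono; lia. apply Zmono; lia.
      rewrite <- Zper. apply Zmono; lia.
  - intros hd. destruct k as [|k'].
    { exfalso. destruct hd as (cc & l & _ & _ & hh). destruct (hh O) as [_ (i & s & _ & hs & _)]. lia. }
    destruct (nonc ltac:(lia)) as (i & hi & ne).
    exists (INR i / INR n), (INR 0 / INR n). split. exists i; auto. split. exists O; split; auto.
    rewrite !fidx; auto.
Qed.


Lemma INR_Z2Nat z : (0 <= z)%Z -> INR (Z.to_nat z) = IZR z.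
Proof. intros h. rewrite INR_IZR_INZ, Z2Nat.id; auto. Qed.

Lemma nat_above x : exists N : nat, x < INR N.
Proof. destruct (archimed x) as [h1 h2]. destruct (Z_le_gt_dec 0 (up x)).
  - exists (Z.to_nat (up x)). rewrite INR_Z2Nat; auto.
  - exists O. simpl. apply Z.gt_lt in g. apply IZR_lt in g. simpl in g. lra. Qed.

Lemma a_lin V E v a q : is_cyclic V E -> GAM V E v a -> V v -> (1 <= q)%nat ->
  0 <= a q - 1 -> forall b, INR b * ((a q - 1) / INR q) - (a q - 1) <= a b.
Proof. intros hc hg hv hq hr b.
  assert (hq' : 0 < INR q) by (apply lt_0_INR; lia).
  set (r := (a q - 1) / INR q).
  assert (er : a q - 1 = INR q * r) by (unfold r; field; lra).
  assert (r0 : 0 <= r) by (unfold r; apply Rmult_le_pos; auto; left; apply Rinv_0_lt_compat; auto).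
  rewrite er. pose proof (Nat.div_mod_eq b q) as eb.
  set (N := (b / q)%nat) in *. set (s := (b mod q)%nat) in *.
  assert (hs : (s < q)%nat) by (apply Nat.mod_upper_bound; lia).
  destruct N as [|N'].
  - pose proof (a_nonneg _ _ _ _ b hg hv). assert (INR b <= INR q) by (apply le_INR; lia). nra.
  - pose proof (a_sup_iter _ _ _ _ q N' hc hg hv).
    pose proof (a_sup _ _ _ _ (S N' * q)%nat s hc hg hv).
    replace (S N' * q + s)%nat with b in H0 by lia.
    pose proof (a_nonneg _ _ _ _ s hg hv).
    assert (INR b <= INR (S N') * INR q + INR q).
    { rewrite <- mult_INR, <- plus_INR. apply le_INR. lia. }
    nra. Qed.

Lemma D2_hom V E v a q n k : is_cyclic V E -> GAM V E v a -> V v -> (1 <= q)%nat ->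
  0 < (a q - 1) / INR q -> (2 * k < n)%nat -> INR k / INR n < (a q - 1) / INR q ->
  exists W, (forall x, W x -> V x) /\ finite_set W /\
    wf_fin_set (ind_V V W) (ind_E E W) (INR k / INR n).
Proof. intros hc hg hv hq hr hkn hk.
  assert (hq' : 0 < INR q) by (apply lt_0_INR; lia).
  set (r := (a q - 1) / INR q) in *.
  assert (er : a q - 1 = INR q * r) by (unfold r; field; lra).
  set (C := INR q * r + 4).
  set (d := r - INR k / INR n).
  assert (hd : 0 < d) by (unfold d; lra).
  destruct (nat_above ((C + 1) / d)) as [M hM].
  assert (hM' : C + 1 < INR M * d).
  { apply (Rmult_lt_compat_r d) in hM; auto. unfold Rdiv in hM. rewrite Rmult_assoc, Rinv_l in hM by lra. lra. }
  destruct (lub_approx _ _ 1 (hg M) ltac:(lra)) as (x & (c & hc0 & hw & hx) & hxa).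
  assert (fw : fwalk V E c M) by exact hw.
  apply (hom_build V E c M n k r C); auto.
  - rewrite hc0; auto.
  - intros b hb.
    assert (e1 : gl c b - gl c O = rsum (dd c) b) by (unfold gl; simpl; ring).
    rewrite e1.
    pose proof (fw_WK V E c M fw b (M - b) ltac:(lia)) as hs.
    replace (b + (M - b))%nat with M in hs by lia.
    assert (Vb : V (c b)) by (apply (fwalk_V V E c M); auto; rewrite hc0; auto).
    pose proof (a_chase _ _ _ _ _ _ _ _ hc hg hv Vb hs).
    pose proof (a_sup _ _ _ _ b (M - b) hc hg hv).
    replace (b + (M - b))%nat with M in H0 by lia.
    pose proof (a_lin _ _ _ _ q hc hg hv hq ltac:(nra) b). fold r in H1.
    assert (rsum (dd c) M = x) by (rewrite hx; reflexivity).
    unfold C. lra.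
Qed.


Lemma wf_fin_half V E r : wf_fin_set V E r -> r <= 1/2.
Proof. intros (n & k & hkn & -> & _). assert (hn : 0 < INR n) by (apply lt_0_INR; lia).
  assert (INR (2 * k) < INR n) by (apply lt_INR; auto). rewrite mult_INR in H. simpl in H.
  apply (Rmult_le_reg_r (INR n)); auto. unfold Rdiv. rewrite Rmult_assoc, Rinv_l by lra. lra. Qed.

Lemma wf_fin_lub V E r : wf_fin_set V E r -> exists w, is_lub (wf_fin_set V E) w /\ r <= w.
Proof. intros h. destruct (completeness (wf_fin_set V E)) as [w hw].
  - exists (1/2). intros x hx. apply (wf_fin_half V E); auto.
  - eauto.
  - exists w. split; auto. apply (lub_ub _ _ _ hw h). Qed.

Theorem mainTheorem8 (V : R -> Prop) (E : R -> R -> Prop) :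
  is_cyclic V E ->
  forall v : R, V v ->
  exists (w : R) (gamma : nat -> R),
    is_wf V E w /\
    (forall m : nat, (1 <= m)%nat -> is_gamma V E m v (gamma m)) /\
    Un_cv (fun m => gamma (S m) / INR (S m)) w.
Proof.
  intros hc v hv.
  assert (X : forall m, {g | is_lub (walk_len_set V E m v) g}).
  { intros m. apply completeness.
    - exists (INR m). intros x hx. apply wls_WK in hx. destruct hx as [y hy].
      apply (WK_bnd _ _ _ _ _ _ hc hv hy).
    - exists 0. apply wls_WK. exists v. apply WK_const; auto. }
  set (a := fun m => proj1_sig (X m)).
  assert (hg : GAM V E v a) by (intros m; unfold a; destruct (X m); auto).
  assert (base : exists r0, wf_set V E r0 /\ 0 <= r0).
  { set (W0 := fun x => x = v).
    assert (h0 : wf_fin_set (ind_V V W0) (ind_E E W0) 0).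
    { exists 1%nat, O. split. lia. split. simpl. unfold Rdiv; ring.
      exists (fun _ => v). split; [|split; [|split]].
      - intros x _. split; auto. reflexivity.
      - intros x y (i & s & _ & hs & _). lia.
      - intros. left; auto.
      - intros (cc & l & _ & _ & hh). destruct (hh O) as [_ (i & s & _ & hs & _)]. lia. }
    destruct (wf_fin_lub _ _ _ h0) as (r0 & hr0 & le0).
    exists r0. split; auto. exists W0. split. intros x ->; auto. split; auto.
    exists (v :: nil). intros x ->. left; auto. }
  destruct base as (r0 & hr0 & hr0p).
  destruct (completeness (wf_set V E)) as [w hw].
  { exists (1/2). intros x (W & _ & _ & hx). apply (lub_le _ _ _ hx). intros y hy.
    apply (wf_fin_half _ _ _ hy). }
  { eauto. }
  assert (w0 : 0 <= w) by (pose proof (lub_ub _ _ _ hw hr0); lra).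
  assert (D1 : forall q, (1 <= q)%nat -> w <= (a q + 1) / INR q).
  { intros q hq. apply (lub_le _ _ _ hw). intros x (W & hW & _ & hx).
    apply (lub_le _ _ _ hx). intros y hy. apply (D1_elt V E v a W y q); auto. }
  assert (D2 : forall q, (1 <= q)%nat -> (a q - 1) / INR q <= w).
  { intros q hq. assert (hq' : 0 < INR q) by (apply lt_0_INR; lia).
    set (r := (a q - 1) / INR q).
    destruct (Rle_lt_dec r 0) as [rl|rp]. lra.
    apply Rnot_lt_le. intros hlt.
    assert (rh : r < 1/2).
    { pose proof (a_half _ _ _ _ q hc hg hv). unfold r.
      apply (Rmult_lt_reg_r (INR q)); auto. unfold Rdiv. rewrite Rmult_assoc, Rinv_l by lra. lra. }
    destruct (nat_above (2 / (r - w))) as [n0 hn0].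
    set (n := S n0).
    assert (hn : 0 < INR n) by (apply lt_0_INR; lia).
    assert (hnb : 2 / (r - w) < INR n) by (unfold n; rewrite S_INR; lra).
    set (z := (up (r * INR n) - 2)%Z).
    destruct (archimed (r * INR n)) as [u1 u2].
    set (k := Z.to_nat z).
    assert (kb : r * INR n - 2 < INR k < r * INR n).
    { unfold k. destruct (Z_le_gt_dec 0 z) as [zp|zn].
      - rewrite INR_Z2Nat; auto. unfold z. rewrite minus_IZR. lra.
      - replace (Z.to_nat z) with O by lia. change (INR 0) with 0. split.
        + apply Z.gt_lt in zn. apply IZR_lt in zn. unfold z in zn. rewrite minus_IZR in zn. lra.
        + apply Rmult_lt_0_compat; auto. }
    assert (hkn : (2 * k < n)%nat).
    { apply INR_lt. rewrite mult_INR. change (INR 2) with 2. nra. }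
    assert (hkr : INR k / INR n < r).
    { apply (Rmult_lt_reg_r (INR n)); auto. unfold Rdiv. rewrite Rmult_assoc, Rinv_l by lra. lra. }
    destruct (D2_hom V E v a q n k hc hg hv hq rp hkn hkr) as (W & hW & hfin & hel).
    destruct (wf_fin_lub _ _ _ hel) as (rW & hrW & le).
    assert (wf_set V E rW) by (exists W; auto).
    pose proof (lub_ub _ _ _ hw H).
    assert (r - 2 / INR n < INR k / INR n).
    { apply (Rmult_lt_reg_r (INR n)); auto. unfold Rdiv. rewrite Rmult_minus_distr_r, !Rmult_assoc, Rinv_l by lra. lra. }
    assert (2 / INR n < r - w).
    { apply (Rmult_lt_reg_r (INR n)); auto. unfold Rdiv at 1. rewrite Rmult_assoc, Rinv_l by lra.
      apply (Rmult_lt_reg_l (/ (r - w))). apply Rinv_0_lt_compat; lra.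
      replace (/ (r - w) * (2 * 1)) with (2 / (r - w)) by (field; lra).
      replace (/ (r - w) * ((r - w) * INR n)) with (INR n) by (field; lra). lra. }
    lra. }
  exists w, a. split; [exact hw|split].
  - intros m _. apply hg.
  - intros eps he. destruct (nat_above (1 / eps)) as [N hN]. exists N. intros m hm.
    assert (hq : (1 <= S m)%nat) by lia.
    pose proof (D1 _ hq). pose proof (D2 _ hq).
    assert (hS : 0 < INR (S m)) by (apply lt_0_INR; lia).
    assert (INR N <= INR m) by (apply le_INR; lia).
    assert (hinv : 1 / INR (S m) < eps).
    { rewrite S_INR in *. apply (Rmult_lt_reg_r (INR m + 1)); try lra.
      unfold Rdiv. rewrite Rmult_assoc, Rinv_l by lra.
      apply (Rmult_lt_reg_l (/ eps)). apply Rinv_0_lt_compat; lra.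
      replace (/ eps * (eps * (INR m + 1))) with (INR m + 1) by (field; lra).
      unfold Rdiv in hN. lra. }
    unfold Rdist. 
    replace ((a (S m) + 1) / INR (S m)) with (a (S m) / INR (S m) + 1 / INR (S m)) in H by (field; lra).
    replace ((a (S m) - 1) / INR (S m)) with (a (S m) / INR (S m) - 1 / INR (S m)) in H0 by (field; lra).
    apply Rabs_def1; lra.
Qed.
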